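(* Let $N,p,q\in\mathbb{N}$ with $p+q\le N$, let $t=N-p-q$, let $\lambda$ be a partition of length $\le N$, and let $A$ be an $N\times t$ matrix (possibly empty). Let $u=(u_1,\ldots,u_p)$, $v=(v_1,\ldots,v_q)$ be indeterminates (or elements of a field with $u_i\ne v_k$ for all $i,k$). Let $D$ be the determinant of the $N\times N$ matrix whose first $t$ columns are those of $A$, whose column $t+i$ ($1\le i\le p$) is $\operatorname{H}^N_{t+i,\lambda}(u_i,\ldots,u_p,v_1,\ldots,v_q)$, and whose column $t+p+i$ ($1\le i\le q$) is $\operatorname{H}^N_{t+p+i,\lambda}(v_i,\ldots,v_q)$. Let $D'$ be the determinant of the matrix obtained by replacing, for $1\le i\le p$, column $t+i$ by $\operatorname{H}^N_{t+q+i,\lambda}(u_i,\ldots,u_p)$ (other columns unchanged), and let $D''$ be the determinant of the matrix obtained from that one by reversing the order of columns $t+1,\ldots,t+p$. Then \[ D=\frac{D'}{\prod_{i=1}^p\prod_{k=1}^q(u_i-v_k)}=\frac{D''}{(-1)^{p(p-1)/2}\prod_{i=1}^p\prod_{k=1}^q(u_i-v_k)}. \]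
   Context: $\hom_m$ is the complete homogeneous symmetric polynomial of degree $m$ ($\hom_0=1$, $\hom_m=0$ for $m<0$). Partitions are extended by zeros: $\lambda_j=0$ beyond the length. For $s\in\mathbb{N}_0$ and variables $t_1,\ldots,t_m$, $\operatorname{H}^N_{s,\lambda}(t_1,\ldots,t_m)$ denotes the column vector $\bigl[\hom_{s+\lambda_j-j}(t_1,\ldots,t_m)\bigr]_{j=1}^N$. *)

(* Defs.v *)
From mathcomp Require Import all_boot all_order all_algebra.
Set Implicit Arguments. Unset Strict Implicit. Unset Printing Implicit Defensive.
Import Order.TTheory GRing.Theory Num.Theory.
Local Open Scope ring_scope.

Section Defs.
Variable F : fieldType.

(* complete homogeneous symmetric polynomial h_m evaluated at x = (x_1,...,x_k):
   sum of all monomials x_1^e_1 ... x_k^e_k with e_1+...+e_k = m. *)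
Definition homn (m : nat) (x : seq F) : F :=
  \sum_(e : {ffun 'I_(size x) -> 'I_m.+1} | ((\sum_(i < size x) (e i : nat))%N == m))
     \prod_(i < size x) (nth 0 x i) ^+ (e i).

Definition hom (m : int) (x : seq F) : F :=
  match m with Posz n => homn n x | Negz _ => 0 end.

(* H^N_{s,lambda}(x): entry in row r (0-based, i.e. j = r+1) is
   h_{s + lambda_j - j}(x), lambda extended by zeros. *)
Definition Hcol (N : nat) (lam : seq nat) (s : nat) (x : seq F) (r : 'I_N) : F :=
  hom (s%:Z + (nth 0%N lam r)%:Z - (r.+1)%:Z) x.

(* columns 0-based: column c <-> paper's column c+1. t := N - p - q. *)
Definition Dmat (N p q : nat) (A : 'M[F]_(N, N - p - q)) (lam : seq nat)
    (u : p.-tuple F) (v : q.-tuple F) : 'M[F]_N :=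
  \matrix_(r < N, c < N)
    let t := (N - p - q)%N in
    if (c < t)%N then oapp (A r) 0 (insub (val c))
    else if (c < t + p)%N then Hcol lam c.+1 (drop (c - t) u ++ v) r
    else Hcol lam c.+1 (drop (c - t - p) v) r.

Definition Dpmat (N p q : nat) (A : 'M[F]_(N, N - p - q)) (lam : seq nat)
    (u : p.-tuple F) (v : q.-tuple F) : 'M[F]_N :=
  \matrix_(r < N, c < N)
    let t := (N - p - q)%N in
    if (c < t)%N then oapp (A r) 0 (insub (val c))
    else if (c < t + p)%N then Hcol lam (t + q + (c - t)).+1 (drop (c - t) u) r
    else Hcol lam c.+1 (drop (c - t - p) v) r.

Definition Dppmat (N p q : nat) (A : 'M[F]_(N, N - p - q)) (lam : seq nat)
    (u : p.-tuple F) (v : q.-tuple F) : 'M[F]_N :=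
  \matrix_(r < N, c < N)
    let t := (N - p - q)%N in
    if (c < t)%N then oapp (A r) 0 (insub (val c))
    else if (c < t + p)%N then
      let i0 := (p.-1 - (c - t))%N in
      Hcol lam (t + q + i0).+1 (drop i0 u) r
    else Hcol lam c.+1 (drop (c - t - p) v) r.

End Defs.

(* Main.v *)
Require Import Defs.
From mathcomp Require Import all_boot all_order all_algebra ring zify.
Set Implicit Arguments. Unset Strict Implicit. Unset Printing Implicit Defensive.
Import Order.TTheory GRing.Theory Num.Theory.
Local Open Scope ring_scope.

Section H.
Variable F : fieldType.

Fixpoint hrec (n : nat) (x : seq F) : F :=
  match x with
  | [::] => (n == 0)%:R
  | a :: X => \sum_(k < n.+1) a ^+ k * hrec (n - k) X
  end.

Definition G (K : nat) (a : F) : {poly F} := \sum_(k < K.+1) a ^+ k *: 'X^k.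

Lemma coefG K a j : (G K a)`_j = if (j <= K)%N then a ^+ j else 0.
Proof.
rewrite /G coef_sum.
under eq_bigr => k _ do rewrite coefZ coefXn.
case: leqP => hj.
  rewrite (bigD1 (Ordinal (hj : j < K.+1)%N)) //= eqxx mulr1 big1 ?addr0 //.
  move=> k /eqP hk; case: eqP => [e|]; last by rewrite mulr0.
  by exfalso; apply: hk; apply/val_inj.
rewrite big1 // => k _; case: eqP => [e|]; last by rewrite mulr0.
by move: (ltn_ord k); rewrite -e ltnS leqNgt hj.
Qed.

Lemma coefP x n K : (n <= K)%N -> (\prod_(a <- x) G K a)`_n = hrec n x.
Proof.
elim: x n => [|a X IH] n hn /=.
  by rewrite big_nil coef1.
rewrite big_cons coefM; apply: eq_bigr => k _.
rewrite coefG IH; last by rewrite (leq_trans (leq_subr _ _)).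
by rewrite (leq_trans _ hn) // -ltnS.
Qed.

Lemma homnE n x : homn n x = hrec n x.
Proof.
rewrite -(coefP x (leqnn n)) (big_nth 0) big_mkord /G.
rewrite bigA_distr_bigA /= coef_sum /homn big_mkcond /=.
apply: eq_bigr => e _.
have -> : \prod_(i < size x) ((nth 0 x i) ^+ e i *: 'X^(e i)) =
   (\prod_(i < size x) (nth 0 x i) ^+ e i)%:P * 'X^(\sum_(i < size x) (e i : nat)).
  rewrite -prodrXr rmorph_prod -big_split /=.
  by apply: eq_bigr => i _; rewrite mul_polyC.
by rewrite coefCM coefXn eq_sym; case: eqP => _; rewrite ?mulr1 ?mulr0.
Qed.

Lemma hrec_perm n x y : perm_eq x y -> hrec n x = hrec n y.
Proof.
by move=> pxy; rewrite -!(coefP _ (leqnn n)) (perm_big _ pxy).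
Qed.

Lemma hrec0 x : hrec 0 x = 1.
Proof.
elim: x => [|a X IH] //=; by rewrite big_ord1 expr0 mul1r subn0.
Qed.

Lemma hrecS n a X : hrec n.+1 (a :: X) = hrec n.+1 X + a * hrec n (a :: X).
Proof.
rewrite /= big_ord_recl expr0 mul1r subn0; congr (_ + _).
rewrite mulr_sumr; apply: eq_bigr => k _.
by rewrite /bump /= subSS exprS mulrA.
Qed.

Lemma hrec_diff n a b X :
  (a - b) * hrec n (a :: b :: X) = hrec n.+1 (a :: X) - hrec n.+1 (b :: X).
Proof.
elim: n => [|n IH].
  rewrite hrec0 mulr1 !hrecS !hrec0 !mulr1; ring.
rewrite hrecS mulrDr mulrCA IH (hrecS n.+1 a X) (hrecS n.+1 b X).
ring.
Qed.


Lemma hom_diff (m : int) (a b : F) (X : seq F) :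
  (a - b) * Defs.hom m (a :: b :: X) = Defs.hom (m + 1) (a :: X) - Defs.hom (m + 1) (b :: X).
Proof.
case: m => [n|[|k]] /=.
- rewrite addn1 !homnE; exact: hrec_diff.
- by rewrite subnn !homnE !hrec0 mulr0 subrr.
- by rewrite mulr0 subrr.
Qed.

Lemma hom_perm (m : int) (x y : seq F) : perm_eq x y -> Defs.hom m x = Defs.hom m y.
Proof. by case: m => [n|k] //= pxy; rewrite !homnE (hrec_perm _ pxy). Qed.

Lemma Hcol_diff N lam s (a b : F) (X : seq F) (r : 'I_N) :
  (a - b) * Hcol lam s (a :: b :: X) r = Hcol lam s.+1 (a :: X) r - Hcol lam s.+1 (b :: X) r.
Proof.
rewrite /Hcol hom_diff; congr (Defs.hom _ _ - Defs.hom _ _);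
  rewrite -[s.+1]addn1 PoszD; ring.
Qed.

Lemma Hcol_perm N lam s (x y : seq F) (r : 'I_N) : perm_eq x y -> Hcol lam s x r = Hcol lam s y r.
Proof. by move=> pxy; rewrite /Hcol (hom_perm _ pxy). Qed.


Lemma det_colop n (M M' : 'M[F]_n) (j k : 'I_n) (a : F) : k != j ->
  (forall r c, c != j -> M' r c = M r c) ->
  (forall r, M' r j = a * M r j + M r k) -> \det M' = a * \det M.
Proof.
move=> hkj hc hj.
rewrite -det_tr -[\det M]det_tr.
pose C := \matrix_(i, l) (if i == j then M l k else M l i).
rewrite (@determinant_multilinear _ _ _ M^T C j a 1).
- rewrite (@determinant_alternate _ _ C j k) ?mulr0 ?addr0 //.
    by rewrite eq_sym.
  by move=> l; rewrite !mxE eqxx (negbTE hkj).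
- apply/rowP => l; rewrite !mxE eqxx hj; ring.
- apply/matrixP => i l; have hl : lift j i != j by rewrite eq_sym neq_lift.
  by rewrite !mxE hc.
- apply/matrixP => i l; have hl : lift j i != j by rewrite eq_sym neq_lift.
  by rewrite !mxE (negbTE hl) hc.
Qed.

End H.

Section M.
Variables (F : fieldType) (N : nat) (lam : seq nat).

Definition mat (h : nat -> 'I_N -> F) : 'M[F]_N := \matrix_(r, c) h c r.

Definition Gcol (f g : nat -> 'I_N -> F) t p r (u v : seq F) (c : nat) : 'I_N -> F :=
  if (c < t)%N then f c
  else if (c < t + p)%N then Hcol lam (c + 1 + r) (drop (c - t) u ++ v)
  else if (c < t + p + r)%N then g c
  else Hcol lam c.+1 (drop (c - t - p - r) v).

Definition Gcol' (f g : nat -> 'I_N -> F) t p r q (u v : seq F) (c : nat) : 'I_N -> F :=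
  if (c < t)%N then f c
  else if (c < t + p)%N then Hcol lam (c + 1 + r + q) (drop (c - t) u)
  else if (c < t + p + r)%N then g c
  else Hcol lam c.+1 (drop (c - t - p - r) v).

Lemma mat_ext (h1 h2 : nat -> 'I_N -> F) : (forall c : 'I_N, h1 c =1 h2 c) -> mat h1 = mat h2.
Proof. by move=> e; apply/matrixP => r c; rewrite !mxE e. Qed.

Lemma step f g t p r (u : seq F) v1 v' : size u = p -> (t + p + r + (size v').+1 = N)%N ->
  \det (mat (Gcol f g t p r u (v1 :: v'))) * \prod_(i < p) (nth 0 u i - v1) =
  \det (mat (Gcol f (fun c => if (c < t + p + r)%N then g c
                              else Hcol lam (t + p + r).+1 (v1 :: v')) t p r.+1 u v')).
Proof.
move=> hu hN.
set OLD := Gcol f g t p r u (v1 :: v').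
pose NEW c : 'I_N -> F := Hcol lam (c + 1 + r.+1) (drop (c - t) u ++ v').
pose Mj j := mat (fun c : nat => if (t <= c < t + j)%N then NEW c else OLD c).
have key : forall j, (j <= p)%N -> \det (mat OLD) * \prod_(i < j) (nth 0 u i - v1) = \det (Mj j).
  elim=> [|j IH] hj.
    rewrite big_ord0 mulr1; congr (\det _); apply: mat_ext => c x.
    by have -> : (t <= c < t + 0)%N = false by lia.
  rewrite big_ord_recr /= mulrA IH 1?ltnW // mulrC.
  have htj : (t + j < N)%N by lia.
  pose k := if (j.+1 < p)%N then (t + j.+1)%N else (t + p + r)%N.
  have hk : (k < N)%N by rewrite /k; case: ifP; lia.
  symmetry; apply: (@det_colop _ _ (Mj j) (Mj j.+1) (Ordinal htj) (Ordinal hk)).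
  - by rewrite -val_eqE /= /k; case: ifP; lia.
  - move=> x c hc; rewrite !mxE.
    have hc' : (nat_of_ord c != t + j)%N by move: hc; rewrite -val_eqE.
    have -> : (t <= c < t + j.+1)%N = (t <= c < t + j)%N by move: hc'; lia.
    done.
  - move=> x; rewrite !mxE /=.
    have -> : (t <= t + j < t + j.+1)%N by lia.
    have -> : (t <= t + j < t + j)%N = false by lia.
    have -> : (t <= k < t + j)%N = false by rewrite /k; case: ifP; lia.
    have hOk : OLD k x = Hcol lam (t + j + 1 + r).+1 (drop j.+1 u ++ v1 :: v') x.
      rewrite /OLD /Gcol /k; case: (ltnP j.+1 p) => h.
        rewrite ifF; last by lia.
        rewrite ifT; last by lia.
        have -> : (t + j.+1 - t = j.+1)%N by lia.
        by have -> : (t + j.+1 + 1 + r = (t + j + 1 + r).+1)%N by lia.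
      rewrite ifF; last by lia.
      rewrite ifF; last by lia.
      rewrite ifF; last by lia.
      have -> : (t + p + r - t - p - r = 0)%N by lia.
      rewrite drop0 drop_oversize ?hu; last by lia.
      by have -> : (t + p + r = t + j + 1 + r)%N by lia.
    have hOj : OLD (t + j)%N x = Hcol lam (t + j + 1 + r) (drop j u ++ v1 :: v') x.
      rewrite /OLD /Gcol ifF; last by lia.
      rewrite ifT; last by lia.
      by have -> : (t + j - t = j)%N by lia.
    rewrite hOk hOj; change (NEW (t + j)%N x) with (Hcol lam (t + j + 1 + r.+1) (drop (t + j - t) u ++ v') x).
    have -> : (t + j - t = j)%N by lia.
    rewrite (drop_nth 0); last by rewrite hu.
    set Z := drop j.+1 u.
    rewrite cat_cons (@Hcol_perm _ _ _ _ (u`_j :: (Z ++ v1 :: v')) (u`_j :: v1 :: (Z ++ v'))); last first.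
      by rewrite perm_cons -cat1s perm_catCA.
    rewrite (@Hcol_perm _ _ _ _ (Z ++ v1 :: v') (v1 :: (Z ++ v'))); last first.
      by rewrite -cat1s perm_catCA.
    rewrite Hcol_diff addnS; ring.
rewrite key ?leqnn //; congr (\det _); apply: mat_ext => c x.
rewrite /OLD /NEW /Gcol.
case: (ltnP c t) => h1 //.
case: (ltnP c (t + p)) => h2 //=.
case: (ltnP c (t + p + r)) => h3.
  by rewrite ifT //; lia.
case: (ltnP c (t + p + r.+1)) => h4.
  have hc : nat_of_ord c = (t + p + r)%N by lia.
  rewrite hc; have -> : (t + p + r - t - p - r = 0)%N by lia.
  by rewrite drop0.
have -> : (c - t - p - r = (c - t - p - r.+1).+1)%N by lia.
by [].
Qed.


Lemma gen (v : seq F) : forall f g t p r q (u : seq F), size u = p -> size v = q ->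
  (t + p + r + q = N)%N ->
  \det (mat (Gcol f g t p r u v)) * \prod_(i < p) \prod_(k < q) (nth 0 u i - nth 0 v k)
  = \det (mat (Gcol' f g t p r q u v)).
Proof.
elim: v => [|v1 v' IH] f g t p r q u hu hv hN.
  rewrite -hv /= big1 ?mulr1; last by move=> i _; rewrite big_ord0.
  congr (\det _); apply: mat_ext => c x.
  by rewrite /Gcol /Gcol' addn0 cats0.
rewrite -hv /=.
under eq_bigr => i _ do rewrite big_ord_recl /=.
rewrite big_split /= mulrA step //; last by rewrite -hN -hv.
rewrite IH //; last by rewrite -hN -hv /=; lia.
congr (\det _); apply: mat_ext => c x.
rewrite /Gcol'.
case: (ltnP c t) => h1 //.
case: (ltnP c (t + p)) => h2 //=.
  by rewrite !addnS !addSn.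
case: (ltnP c (t + p + r)) => h3.
  by rewrite ifT //; lia.
case: (ltnP c (t + p + r.+1)) => h4.
  have hc : nat_of_ord c = (t + p + r)%N by lia.
  rewrite hc; have -> : (t + p + r - t - p - r = 0)%N by lia.
  by rewrite drop0.
have -> : (c - t - p - r = (c - t - p - r.+1).+1)%N by lia.
by [].
Qed.

End M.

Section R.
Variables (F : fieldType) (N : nat).

Definition swapi (i j c : nat) : nat := if c == i then j else if c == j then i else c.

Lemma swap_det (h : nat -> 'I_N -> F) (i j : nat) : (i < N)%N -> (j < N)%N -> i != j ->
  \det (mat (fun c => h (swapi i j c))) = - \det (mat h).
Proof.
move=> hi hj hij.
have -> : mat (fun c => h (swapi i j c)) = col_perm (perm.tperm (Ordinal hi) (Ordinal hj)) (mat h).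
  apply/matrixP => r c; rewrite !mxE /swapi.
  case: perm.tpermP => [->|->|n1 n2] /=.
  - by rewrite eqxx.
  - by rewrite eq_sym (negbTE hij) eqxx.
  - case: eqP => e1; first by case: n1; apply/val_inj.
    case: eqP => e2; first by case: n2; apply/val_inj.
    by [].
rewrite col_permE det_mulmx det_perm perm.odd_permV perm.odd_tperm.
rewrite -val_eqE /= hij expr1; ring.
Qed.

Definition revi (t p c : nat) : nat := if (t <= c < t + p)%N then (t + p.-1 - (c - t))%N else c.

Lemma sign_step p : (-1) ^+ (p.+2 * (p.+2 - 1) %/ 2) = - (-1) ^+ (p * (p - 1) %/ 2) :> F.
Proof.
have e : (p.+2 * (p.+2 - 1) %/ 2 = (p * (p - 1) %/ 2) + p.*2.+1)%N.
  have e1 : (p.+2 * (p.+2 - 1) = p.*2.+1 * 2 + p * (p - 1))%N.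
    case: p => [|p] //; rewrite -mul2n; nia.
  by rewrite e1 divnMDl // addnC.
rewrite e exprD exprS -mul2n exprM sqrrN expr1n expr1n; ring.
Qed.

Lemma rev_det p : forall (t : nat) (h : nat -> 'I_N -> F), (t + p <= N)%N ->
  \det (mat (fun c => h (revi t p c))) = (-1) ^+ (p * (p - 1) %/ 2) * \det (mat h).
Proof.
elim/ltn_ind: p => -[|[|p]] IH t h hN.
- rewrite mul0n div0n expr0 mul1r; congr (\det _); apply: mat_ext => c x.
  rewrite /revi; have -> : (t <= c < t + 0)%N = false by lia. by [].
- rewrite mul1n subnn div0n expr0 mul1r; congr (\det _); apply: mat_ext => c x.
  rewrite /revi; case: ifP => hc //.
  move/andP: hc => hc. have -> : (t + 1.-1 - (c - t) = c)%N by lia. by [].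
have -> : mat (fun c => h (revi t p.+2 c)) =
    mat (fun c => (fun c' => h (swapi t (t + p.+1) c')) (revi t.+1 p c)).
  apply: mat_ext => c x; congr (h _ x); rewrite /revi /swapi.
  by repeat case: ifP; intros; lia.
rewrite (IH p _ _ (fun c' => h (swapi t (t + p.+1) c'))) //; last by lia.
rewrite swap_det ?sign_step; [ring | lia | lia | lia].
Qed.

End R.

Theorem lemma7p1 (F : fieldType) (N p q : nat) (hpq : (p + q <= N)%N)
  (lam : seq nat) (hsort : sorted geq lam) (hpos : all (fun x => 0 < x)%N lam)
  (hsz : (size lam <= N)%N)
  (A : 'M[F]_(N, N - p - q)) (u : p.-tuple F) (v : q.-tuple F)
  (huv : forall (i : 'I_p) (k : 'I_q), tnth u i != tnth v k) :
  \det (Dmat A lam u v) =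
    \det (Dpmat A lam u v) / \prod_(i < p) \prod_(k < q) (tnth u i - tnth v k)
  /\
  \det (Dmat A lam u v) =
    \det (Dppmat A lam u v) /
      ((-1) ^+ (p * (p - 1) %/ 2) * \prod_(i < p) \prod_(k < q) (tnth u i - tnth v k)).
Proof.
set t := (N - p - q)%N.
pose f := fun (c : nat) (r : 'I_N) => oapp (A r) 0 (insub c).
pose g := fun (c : nat) (r : 'I_N) => (0 : F).
have hu : size u = p by rewrite size_tuple.
have hv : size v = q by rewrite size_tuple.
have hN : (t + p + 0 + q = N)%N by rewrite /t; lia.
have eD : Dmat A lam u v = mat (Gcol lam f g t p 0 u v).
  apply/matrixP => r c; rewrite !mxE /Gcol -/t !addn0 addn1 subn0.
  by case: ifP => // _; case: ifP.
have eDp : Dpmat A lam u v = mat (Gcol' lam f g t p 0 q u v).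
  apply/matrixP => r c; rewrite !mxE /Gcol' -/t !addn0 subn0.
  case: ifP => // h1; case: ifP => // h2.
  by have -> : ((t + q + (c - t)).+1 = c + 1 + q)%N by lia.
have eDpp : Dppmat A lam u v = mat (fun c => Gcol' lam f g t p 0 q u v (revi t p c)).
  apply/matrixP => r c; rewrite !mxE /Gcol' /revi -/t !addn0 subn0.
  case: (ltnP c t) => h1 /=.
    by rewrite h1.
  case: (ltnP c (t + p)) => h2 /=.
    rewrite ifF; last by lia.
    rewrite ifT; last by lia.
    have -> : (t + p.-1 - (c - t) - t = p.-1 - (c - t))%N by lia.
    by have -> : ((t + q + (p.-1 - (c - t))).+1 = t + p.-1 - (c - t) + 1 + q)%N by lia.
  by rewrite ifF ?ifF //; lia.
have hP : \prod_(i < p) \prod_(k < q) (tnth u i - tnth v k) != 0.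
  apply/prodf_neq0 => i _; apply/prodf_neq0 => k _; by rewrite subr_eq0 huv.
have key := @gen F N lam v f g t p 0 q u hu hv hN.
have eP : \prod_(i < p) \prod_(k < q) (tnth u i - tnth v k) =
          \prod_(i < p) \prod_(k < q) (nth 0 u i - nth 0 v k).
  by apply: eq_bigr => i _; apply: eq_bigr => k _; rewrite !(tnth_nth 0).
have hD : \det (Dmat A lam u v) * \prod_(i < p) \prod_(k < q) (tnth u i - tnth v k) =
          \det (Dpmat A lam u v) by rewrite eD eDp eP.
have hDpp : \det (Dppmat A lam u v) = (-1) ^+ (p * (p - 1) %/ 2) * \det (Dpmat A lam u v).
  by rewrite eDpp rev_det ?eDp //; rewrite /t; lia.
split.
  by rewrite -hD mulfK.
by rewrite hDpp -hD; field; rewrite hP signr_eq0.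
Qed.
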